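(* (i) For integers $r\geq1$, $k_1\geq2$, $k_2,\ldots,k_r\geq1$, \[ \lim_{m\to\infty}\zeta^{\star}(k_1,\ldots,k_r,\{2\}^m)=\sum_{n_1\geq\cdots\geq n_r\geq1}\frac{2}{n_1^{k_1}\cdots n_{r-1}^{k_{r-1}}\,n_r^{k_r-1}(n_r+1)}. \] (ii) For every integer $p\geq2$, \[ \lim_{m\to\infty}\zeta^{\star}(\{p\}^m)=\prod_{n\geq2}\frac{1}{1-n^{-p}}. \]
   Context: $\zeta^{\star}(k_1,\ldots,k_r)=\sum_{n_1\geq\cdots\geq n_r\geq 1}\frac{1}{n_1^{k_1}\cdots n_r^{k_r}}$ for $k_1\geq2$, $k_2,\ldots,k_r\geq1$; $\{p\}^m$ denotes $m$ consecutive arguments equal to $p$. *)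

(* Defs.v *)
From Stdlib Require Import Reals List.
From Coquelicot Require Import Coquelicot.
Import ListNotations.
Open Scope R_scope.

(* Nested truncated sum over N >= n1 >= n2 >= ... >= nr >= 1:
   nested_trunc [f1; ...; fr] N = sum_{N>=n1>=...>=nr>=1} f1 n1 * ... * fr nr.
   The empty list gives the empty product 1. *)
Fixpoint nested_trunc (fs : list (nat -> R)) (N : nat) : R :=
  match fs with
  | [] => 1
  | f :: fs' => sum_n_m (fun n => f n * nested_trunc fs' n) 1 N
  end.

Definition inv_pow (k : nat) : nat -> R := fun n => / (INR n ^ k).

Definition zeta_star_trunc (ks : list nat) (N : nat) : R :=
  nested_trunc (map inv_pow ks) N.

(* zeta^star(k1,...,kr) = lim_{N -> oo} of the truncated sums
   (terms are positive, so this is the value of the multiple series). *)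
Definition zeta_star (ks : list nat) : R := real (Lim_seq (zeta_star_trunc ks)).

Definition rhs_i_trunc (ks : list nat) (N : nat) : R :=
  nested_trunc
    (map inv_pow (removelast ks) ++
     [fun n => 2 / (INR n ^ (last ks 0%nat - 1) * (INR n + 1))]) N.

Fixpoint euler_prod_trunc (p : nat) (N : nat) : R :=
  match N with
  | O => 1
  | S N' => if Nat.leb 2 N then euler_prod_trunc p N' * / (1 - / (INR N ^ p))
            else euler_prod_trunc p N'
  end.

(* Main.v *)
Require Import Defs.
From Stdlib Require Import Reals List Lra Lia Psatz.
From Coquelicot Require Import Coquelicot.
Import ListNotations.
Open Scope R_scope.

Lemma sum0 (f : nat -> R) : @eq R (sum_n_m f 1 0) 0.
Proof. rewrite sum_n_m_zero; [reflexivity|lia]. Qed.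

Lemma sumS (f : nat -> R) N : @eq R (sum_n_m f 1 (S N)) (sum_n_m f 1 N + f (S N)).
Proof. rewrite sum_n_Sm; [reflexivity|lia]. Qed.

Lemma sum_le_loc (f g : nat -> R) N :
  (forall n, (1 <= n <= N)%nat -> f n <= g n) -> sum_n_m f 1 N <= sum_n_m g 1 N.
Proof.
  induction N; intros H.
  - rewrite !sum0; lra.
  - rewrite !sumS. assert (f (S N) <= g (S N)) by (apply H; lia).
    assert (sum_n_m f 1 N <= sum_n_m g 1 N) by (apply IHN; intros; apply H; lia). lra.
Qed.

Lemma sum_nonneg (f : nat -> R) N :
  (forall n, (1 <= n <= N)%nat -> 0 <= f n) -> 0 <= sum_n_m f 1 N.
Proof.
  induction N; intros H. rewrite sum0; lra.
  rewrite sumS. assert (0 <= f (S N)) by (apply H; lia).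
  assert (0 <= sum_n_m f 1 N) by (apply IHN; intros; apply H; lia). lra.
Qed.

Lemma sum_scal (c : R) (f : nat -> R) N :
  @eq R (sum_n_m (fun n => c * f n) 1 N) (c * sum_n_m f 1 N).
Proof. induction N. rewrite !sum0; ring. rewrite !sumS, IHN; ring. Qed.

Lemma sum_lim (g : nat -> nat -> R) (l : nat -> R) N :
  (forall n, (1 <= n <= N)%nat -> is_lim_seq (fun m => g m n) (l n)) ->
  is_lim_seq (fun m => sum_n_m (g m) 1 N) (sum_n_m l 1 N).
Proof.
  induction N; intros H.
  - rewrite sum0. apply is_lim_seq_ext with (fun _ => 0).
    intros; rewrite sum0; auto. apply is_lim_seq_const.
  - rewrite sumS. apply is_lim_seq_ext with (fun m => sum_n_m (g m) 1 N + g m (S N)).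
    intros; rewrite sumS; auto.
    apply is_lim_seq_plus'. apply IHN; intros; apply H; lia. apply H; lia.
Qed.

Fixpoint W (fs : list (nat -> R)) (h : nat -> R) (N : nat) : R :=
  match fs with
  | [] => h N
  | f :: fs' => sum_n_m (fun n => f n * W fs' h n) 1 N
  end.

Lemma nested_app fs gs N : nested_trunc (fs ++ gs) N = W fs (nested_trunc gs) N.
Proof.
  revert N; induction fs as [|f fs IH]; intros N; simpl; auto.
  apply sum_n_m_ext; intros; rewrite IH; auto.
Qed.

Lemma W_last fs f h N :
  W (fs ++ [f]) h N = W fs (fun n => sum_n_m (fun a => f a * h a) 1 n) N.
Proof.
  revert N; induction fs as [|g fs IH]; intros N; simpl; auto.
  apply sum_n_m_ext; intros; rewrite IH; auto.
Qed.

Lemma W_ext fs h h' :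
  (forall n, (1 <= n)%nat -> h n = h' n) -> forall N, (1 <= N)%nat -> W fs h N = W fs h' N.
Proof.
  intros H; induction fs as [|f fs IH]; intros N HN; simpl; auto.
  apply sum_n_m_ext_loc; intros k Hk; rewrite IH; auto; lia.
Qed.

Definition nonneg1 (f : nat -> R) := forall n, (1 <= n)%nat -> 0 <= f n.

Lemma W_mono fs h h' : List.Forall nonneg1 fs ->
  (forall n, (1 <= n)%nat -> 0 <= h n <= h' n) ->
  forall N, (1 <= N)%nat -> 0 <= W fs h N <= W fs h' N.
Proof.
  intros Hf H; induction fs as [|f fs IH]; intros N HN; simpl; auto.
  inversion Hf; subst. split.
  - apply sum_nonneg; intros n Hn. apply Rmult_le_pos. apply H2; lia. apply IH; auto; lia.
  - apply sum_le_loc; intros n Hn. apply Rmult_le_compat_l. apply H2; lia. apply IH; auto; lia.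
Qed.

Lemma W_lim fs (h : nat -> nat -> R) (h' : nat -> R) :
  (forall n, (1 <= n)%nat -> is_lim_seq (fun m => h m n) (h' n)) ->
  forall N, (1 <= N)%nat -> is_lim_seq (fun m => W fs (h m) N) (W fs h' N).
Proof.
  intros H; induction fs as [|f fs IH]; intros N HN; simpl; auto.
  apply sum_lim; intros n Hn.
  apply is_lim_seq_mult'. apply is_lim_seq_const. apply IH; lia.
Qed.

Lemma nested_nonneg fs : List.Forall nonneg1 fs -> forall N, 0 <= nested_trunc fs N.
Proof.
  intros Hf; induction Hf; intros N; simpl. lra.
  apply sum_nonneg; intros n Hn. apply Rmult_le_pos; auto. apply H; lia.
Qed.

Lemma nested_incr f fs : List.Forall nonneg1 (f :: fs) -> forall N,
  nested_trunc (f :: fs) N <= nested_trunc (f :: fs) (S N).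
Proof.
  intros Hf N; simpl. rewrite sumS. inversion Hf; subst.
  assert (0 <= f (S N) * nested_trunc fs (S N)).
  { apply Rmult_le_pos. apply H1; lia. apply nested_nonneg; auto. }
  lra.
Qed.

Lemma INR_ge1 n : (1 <= n)%nat -> 1 <= INR n.
Proof. intros; apply (le_INR 1); auto. Qed.

Lemma inv_pow_pos k n : (1 <= n)%nat -> 0 < inv_pow k n.
Proof. intros H; unfold inv_pow. apply Rinv_0_lt_compat, pow_lt. pose proof (INR_ge1 n H); lra. Qed.

Lemma inv_pow_anti k k' n : (1 <= n)%nat -> (k' <= k)%nat -> inv_pow k n <= inv_pow k' n.
Proof.
  intros H Hk; unfold inv_pow. pose proof (INR_ge1 n H).
  apply Rinv_le_contravar. apply pow_lt; lra. apply Rle_pow; auto.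
Qed.

Lemma inv_pow_1 k : inv_pow k 1 = 1.
Proof. unfold inv_pow; simpl. rewrite pow1. apply Rinv_1. Qed.

Lemma nonneg_inv_pow k : nonneg1 (inv_pow k).
Proof. intros n Hn; apply Rlt_le, inv_pow_pos; auto. Qed.

Lemma Forall_map_inv_pow ks : List.Forall nonneg1 (map inv_pow ks).
Proof. induction ks; simpl; constructor; auto. apply nonneg_inv_pow. Qed.

Lemma Forall_repeat_inv_pow k m : List.Forall nonneg1 (repeat (inv_pow k) m).
Proof. induction m; simpl; constructor; auto. apply nonneg_inv_pow. Qed.

Definition F s N := nested_trunc (repeat (inv_pow 1) s) N.

Lemma bnd1 ks : List.Forall (fun k => (1 <= k)%nat) ks -> forall N,
  nested_trunc (map inv_pow ks) N <= F (length ks) N.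
Proof.
  intros H; induction H; intros N; unfold F in *; simpl. lra.
  apply sum_le_loc; intros n Hn. apply Rmult_le_compat.
  apply nonneg_inv_pow; lia. apply nested_nonneg, Forall_map_inv_pow.
  apply inv_pow_anti; lia. auto.
Qed.

Lemma inv_le b y : 0 < b -> 1 <= b * y -> / b <= y.
Proof.
  intros Hb H. apply Rmult_le_reg_l with b; auto. rewrite Rinv_r; lra.
Qed.

Lemma sum_isqrt n : sum_n_m (fun a => / sqrt (INR a)) 1 n <= 2 * sqrt (INR n).
Proof.
  induction n. rewrite sum0; simpl. rewrite sqrt_0; lra.
  rewrite sumS. rewrite S_INR.
  assert (Ha : 0 <= sqrt (INR n)) by apply sqrt_pos.
  assert (Hb : 0 < sqrt (INR n + 1)) by (apply sqrt_lt_R0; pose proof (pos_INR n); lra).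
  assert (Ha2 : sqrt (INR n) * sqrt (INR n) = INR n) by (apply sqrt_sqrt, pos_INR).
  assert (Hb2 : sqrt (INR n + 1) * sqrt (INR n + 1) = INR n + 1) by (apply sqrt_sqrt; pose proof (pos_INR n); lra).
  set (a := sqrt (INR n)) in *. set (b := sqrt (INR n + 1)) in *.
  assert (b >= a) by nra.
  assert (/ b <= 2 * b - 2 * a) by (apply inv_le; nra).
  lra.
Qed.

Lemma inv_sqrt x : 0 < x -> / x * sqrt x = / sqrt x.
Proof.
  intros H. assert (Hs := sqrt_lt_R0 x H).
  pattern x at 1; rewrite <- (sqrt_sqrt x) by lra. field; lra.
Qed.

Lemma F_bnd s n : (1 <= n)%nat -> F s n <= 2 ^ s * sqrt (INR n).
Proof.
  revert n; induction s; intros n Hn; unfold F in *; simpl.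
  - rewrite <- sqrt_1 at 1. rewrite Rmult_1_l. apply sqrt_le_1_alt, INR_ge1; auto.
  - apply Rle_trans with (sum_n_m (fun a => 2 ^ s * / sqrt (INR a)) 1 n).
    + apply sum_le_loc; intros a Ha.
      pose proof (INR_ge1 a ltac:(lia)).
      replace (2 ^ s * / sqrt (INR a)) with (inv_pow 1 a * (2 ^ s * sqrt (INR a))).
      apply Rmult_le_compat_l. apply nonneg_inv_pow; lia. apply IHs; lia.
      unfold inv_pow; simpl. rewrite Rmult_1_r. rewrite <- inv_sqrt by lra. ring.
    + rewrite sum_scal. pose proof (sum_isqrt n). pose proof (pow_lt 2 s ltac:(lra)). nra.
Qed.

Lemma sum_i32 N : (1 <= N)%nat ->
  sum_n_m (fun a => / (sqrt (INR a) * sqrt (INR a) * sqrt (INR a))) 1 N <= 3 - 2 / sqrt (INR N).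
Proof.
  induction N; intros HN. lia.
  destruct N.
  - rewrite sumS, sum0. simpl. rewrite sqrt_1. lra.
  - rewrite sumS. eapply Rle_trans. apply Rplus_le_compat_r, IHN; lia.
    assert (H1 : 1 <= INR (S N)) by (apply INR_ge1; lia).
    rewrite (S_INR (S N)).
    assert (Ha : 1 <= sqrt (INR (S N))) by (rewrite <- sqrt_1; apply sqrt_le_1_alt; lra).
    assert (Ha2 : sqrt (INR (S N)) * sqrt (INR (S N)) = INR (S N)) by (apply sqrt_sqrt; lra).
    assert (Hb2 : sqrt (INR (S N) + 1) * sqrt (INR (S N) + 1) = INR (S N) + 1) by (apply sqrt_sqrt; lra).
    assert (Hb : 0 <= sqrt (INR (S N) + 1)) by apply sqrt_pos.
    set (a := sqrt (INR (S N))) in *. set (b := sqrt (INR (S N) + 1)) in *.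
    assert (b >= a) by nra.
    assert (key : a <= 2 * b * b * (b - a)) by nra.
    assert (E : 2 / a - 2 / b - / (b * b * b) = (2 * b * b * b - 2 * a * b * b - a) / (a * b * b * b))
      by (field; nra).
    assert (0 <= (2 * b * b * b - 2 * a * b * b - a) / (a * b * b * b)).
    { apply Rdiv_le_0_compat. nra. assert (0 < a * b) by nra. assert (0 < a*b*b) by nra. nra. }
    lra.
Qed.

Lemma zeta_bnd k1 ks : (2 <= k1)%nat -> List.Forall (fun k => (1 <= k)%nat) ks ->
  forall N, zeta_star_trunc (k1 :: ks) N <= 3 * 2 ^ length ks.
Proof.
  intros Hk Hks N. unfold zeta_star_trunc; simpl.
  destruct N. rewrite sum0. pose proof (pow_lt 2 (length ks) ltac:(lra)). lra.
  apply Rle_trans with (sum_n_m (fun a => 2 ^ length ks * / (sqrt (INR a) * sqrt (INR a) * sqrt (INR a))) 1 (S N)).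
  - apply sum_le_loc; intros a Ha.
    pose proof (INR_ge1 a ltac:(lia)).
    assert (Hs := sqrt_lt_R0 (INR a) ltac:(lra)).
    assert (Ha2 : sqrt (INR a) * sqrt (INR a) = INR a) by (apply sqrt_sqrt; lra).
    apply Rle_trans with (inv_pow 2 a * (2 ^ length ks * sqrt (INR a))).
    apply Rmult_le_compat. apply nonneg_inv_pow; lia. apply nested_nonneg, Forall_map_inv_pow.
    apply inv_pow_anti; lia. eapply Rle_trans. apply bnd1; auto. apply F_bnd; lia.
    right. cbv beta. unfold inv_pow; simpl.
    replace (INR a * (INR a * 1)) with (sqrt (INR a) * sqrt (INR a) * (sqrt (INR a) * sqrt (INR a))) by (rewrite Ha2; ring).
    field. lra.
  - rewrite sum_scal. pose proof (sum_i32 (S N) ltac:(lia)).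
    pose proof (pow_lt 2 (length ks) ltac:(lra)).
    assert (0 <= 2 / sqrt (INR (S N))).
    { apply Rdiv_le_0_compat. lra. apply sqrt_lt_R0. pose proof (INR_ge1 (S N) ltac:(lia)). lra. }
    nra.
Qed.

Lemma zeta_incr k1 ks N : zeta_star_trunc (k1 :: ks) N <= zeta_star_trunc (k1 :: ks) (S N).
Proof. unfold zeta_star_trunc. apply nested_incr. apply (Forall_map_inv_pow (k1 :: ks)). Qed.

Lemma zeta_ex k1 ks : (2 <= k1)%nat -> List.Forall (fun k => (1 <= k)%nat) ks ->
  ex_finite_lim_seq (zeta_star_trunc (k1 :: ks)).
Proof.
  intros. apply ex_finite_lim_seq_incr with (3 * 2 ^ length ks).
  apply zeta_incr. apply zeta_bnd; auto.
Qed.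

Definition T p m N := nested_trunc (repeat (inv_pow p) m) N.

Lemma T_rec p m N : T p (S m) (S N) = T p (S m) N + inv_pow p (S N) * T p m (S N).
Proof. unfold T; simpl. rewrite sumS. reflexivity. Qed.

Lemma T_0 p N : T p 0 N = 1.
Proof. reflexivity. Qed.

Lemma T_at1 p m : T p m 1 = 1.
Proof.
  induction m. reflexivity. unfold T in *; simpl. rewrite sumS, sum0, IHm, inv_pow_1. ring.
Qed.

Lemma E_step p N : (1 <= N)%nat -> euler_prod_trunc p (S N) = euler_prod_trunc p N * / (1 - inv_pow p (S N)).
Proof.
  intros H. destruct N. lia. reflexivity.
Qed.

Lemma x_bnd p N : (1 <= p)%nat -> (1 <= N)%nat -> 0 < inv_pow p (S N) < 1.
Proof.
  intros Hp HN. split. apply inv_pow_pos; lia.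
  apply Rle_lt_trans with (inv_pow 1 (S N)). apply inv_pow_anti; lia.
  unfold inv_pow; rewrite pow_1.
  assert (2 <= INR (S N)) by (apply (le_INR 2); lia).
  rewrite <- Rinv_1. apply Rinv_lt_contravar; nra.
Qed.

Lemma core p : (1 <= p)%nat -> forall N, (1 <= N)%nat ->
  (forall m, T p m N <= T p (S m) N) /\ (forall m, T p m N <= euler_prod_trunc p N) /\
  is_lim_seq (fun m => T p m N) (euler_prod_trunc p N) /\ 1 <= euler_prod_trunc p N.
Proof.
  intros Hp N HN. induction N. lia. destruct N.
  - simpl euler_prod_trunc. repeat split; intros; rewrite ?T_at1; try lra.
    apply is_lim_seq_ext with (fun _ => 1). intros; rewrite T_at1; auto. apply is_lim_seq_const.
  - destruct IHN as [Hinc [Hb [Hl HE]]]; [lia|].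
    rewrite E_step by lia.
    set (N' := S N) in *.
    pose proof (x_bnd p N' Hp ltac:(lia)) as Hx.
    set (x := inv_pow p (S N')) in *.
    set (E := euler_prod_trunc p N') in *.
    assert (Hinv : 1 <= / (1 - x)).
    { rewrite <- Rinv_1 at 1. apply Rinv_le_contravar; lra. }
    assert (HE' : E + x * (E * / (1 - x)) = E * / (1 - x)) by (field; lra).
    assert (Hrec : forall m, T p (S m) (S N') = T p (S m) N' + x * T p m (S N')) by (intros; apply T_rec).
    assert (Hv0 : forall m, 1 <= T p m N').
    { induction m. rewrite T_0; lra. specialize (Hinc m); lra. }
    assert (Hu0 : 0 <= x) by lra.
    assert (Hi : forall m, T p m (S N') <= T p (S m) (S N')).
    { induction m.
      - rewrite Hrec, !T_0. specialize (Hv0 1%nat). nra.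
      - rewrite (Hrec (S m)). rewrite (Hrec m) at 1. specialize (Hinc (S m)). nra. }
    assert (Hbu : forall m, T p m (S N') <= E * / (1 - x)).
    { induction m.
      - rewrite T_0. nra.
      - rewrite Hrec. specialize (Hb (S m)). nra. }
    assert (Hex : ex_finite_lim_seq (fun m => T p m (S N'))).
    { apply ex_finite_lim_seq_incr with (E * / (1 - x)); auto. }
    destruct Hex as [l Hl'].
    assert (Hl1 : is_lim_seq (fun m => T p (S m) (S N')) l) by (apply (is_lim_seq_incr_1 (fun m => T p m (S N'))); auto).
    assert (Hl2 : is_lim_seq (fun m => T p (S m) (S N')) (E + x * l)).
    { apply is_lim_seq_ext with (fun m => T p (S m) N' + x * T p m (S N')).
      intros; rewrite Hrec; auto.
      apply is_lim_seq_plus'. apply (is_lim_seq_incr_1 (fun m => T p m N')); auto.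
      apply is_lim_seq_mult'. apply is_lim_seq_const. auto. }
    apply is_lim_seq_unique in Hl1. apply is_lim_seq_unique in Hl2.
    rewrite Hl1 in Hl2. injection Hl2; intros Heq.
    assert (Hlv : l = E * / (1 - x)).
    { apply Rmult_eq_reg_r with (1 - x); [|lra]. rewrite Rmult_assoc, Rinv_l by (intro; lra). replace (l * (1-x)) with (l - x*l) by ring. rewrite Heq at 1. ring. }
    repeat split; auto.
    + rewrite <- Hlv; auto.
    + nra.
Qed.

Lemma E2_closed n : (1 <= n)%nat -> euler_prod_trunc 2 n = 2 * INR n / (INR n + 1).
Proof.
  induction n; intros H. lia. destruct n. simpl. field.
  rewrite E_step by lia. rewrite IHn by lia. unfold inv_pow.
  rewrite (S_INR (S n)). pose proof (INR_ge1 (S n) ltac:(lia)).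
  set (y := INR (S n)) in *. simpl. field. split; [intro; lra|]. split; [intro; lra|].
  intro Hc. nra.
Qed.

Ltac rring := match goal with |- @eq _ ?a ?b => change (@eq R a b) end; ring.

Lemma dbl (A : nat -> nat -> R) (B : nat -> R) (L : R) :
 (forall m N, A m N <= A m (S N)) ->
 (forall m, ex_finite_lim_seq (A m)) ->
 (forall m N, A m N <= B N) ->
 (forall N, is_lim_seq (fun m => A m N) (B N)) ->
 is_lim_seq B L ->
 is_lim_seq (fun m => real (Lim_seq (A m))) L.
Proof.
  intros Hinc Hex HAB HAl HB.
  assert (Ha: forall m, is_lim_seq (A m) (real (Lim_seq (A m)))).
  { intros m. destruct (Hex m) as [l Hl]. rewrite (is_lim_seq_unique _ _ Hl). simpl. auto. }
  assert (Hup: forall m, real (Lim_seq (A m)) <= L).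
  { intros m. pose proof (is_lim_seq_le _ _ _ _ (HAB m) (Ha m) HB) as H. simpl in H; auto. }
  assert (Hlow: forall m N, A m N <= real (Lim_seq (A m))).
  { intros m N. assert (H : forall k : nat, A m N <= A m (k + N)%nat).
    { induction k; simpl; [lra|]. specialize (Hinc m (k+N)%nat); lra. }
    pose proof (is_lim_seq_le (fun _ => A m N) (fun k => A m (k+N)%nat) (A m N) _ H
       (is_lim_seq_const _) (proj1 (is_lim_seq_incr_n _ N _) (Ha m))) as H0.
    simpl in H0; auto. }
  apply is_lim_seq_spec. intros eps.
  apply is_lim_seq_spec in HB. destruct (HB (pos_div_2 eps)) as [N HN].
  specialize (HN N (le_n N)).
  pose proof (HAl N) as HA. apply is_lim_seq_spec in HA. destruct (HA (pos_div_2 eps)) as [M HM].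
  exists M. intros m Hm. specialize (HM m Hm). specialize (Hlow m N). specialize (Hup m).
  simpl in *. apply Rabs_def2 in HN. apply Rabs_def2 in HM. apply Rabs_def1; lra.
Qed.

Lemma ex_shift (u : nat -> R) : ex_finite_lim_seq (fun N => u (S N)) -> ex_finite_lim_seq u.
Proof. intros [l H]; exists l; apply is_lim_seq_incr_1; auto. Qed.

Lemma ex_unshift (u : nat -> R) : ex_finite_lim_seq u -> ex_finite_lim_seq (fun N => u (S N)).
Proof. intros [l H]; exists l; apply (is_lim_seq_incr_1 u); auto. Qed.

Lemma W_scal fs c h N : W fs (fun n => c * h n) N = c * W fs h N.
Proof.
  revert N; induction fs as [|f fs IH]; intros N; simpl; auto.
  rewrite <- sum_scal. apply sum_n_m_ext; intros; rewrite IH; rring.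
Qed.

Lemma W_incr fs h : List.Forall nonneg1 fs ->
  (forall n, (1 <= n)%nat -> 0 <= h n) -> (forall n, (1 <= n)%nat -> h n <= h (S n)) ->
  forall N, (1 <= N)%nat -> W fs h N <= W fs h (S N).
Proof.
  intros Hf H0 H1. destruct Hf as [|f fs Hf Hfs]; intros N HN; simpl; auto.
  rewrite sumS. assert (0 <= f (S N) * W fs h (S N)).
  { apply Rmult_le_pos. apply Hf; lia. apply (W_mono fs h h); auto. intros; split; [auto|lra]. }
  lra.
Qed.

Definition hm k m n := sum_n_m (fun a => inv_pow k a * T 2 m a) 1 n.
Definition hinf k n := sum_n_m (fun a => inv_pow k a * euler_prod_trunc 2 a) 1 n.

Lemma repA L k m N : zeta_star_trunc ((L ++ [k]) ++ repeat 2%nat m) N = W (map inv_pow L) (hm k m) N.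
Proof.
  unfold zeta_star_trunc. rewrite !map_app. change (map inv_pow [k]) with [inv_pow k]. rewrite nested_app, W_last, map_repeat. reflexivity.
Qed.

Lemma repB L k N : (1 <= k)%nat -> (1 <= N)%nat -> rhs_i_trunc (L ++ [k]) N = W (map inv_pow L) (hinf k) N.
Proof.
  intros Hk HN. unfold rhs_i_trunc. rewrite removelast_last, last_last, nested_app.
  apply W_ext; auto. intros n Hn. simpl. unfold hinf. apply sum_n_m_ext_loc. intros a Ha.
  rewrite E2_closed by lia. unfold inv_pow. destruct k. lia.
  pose proof (INR_ge1 a ltac:(lia)).
  replace (S k - 1)%nat with k by lia. simpl.
  assert (INR a ^ k <> 0) by (apply pow_nonzero; lra).
  field. repeat split; lra.
Qed.

Lemma T_nonneg p m N : 0 <= T p m N.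
Proof. apply nested_nonneg, Forall_repeat_inv_pow. Qed.

Lemma hm_le k m n : (1 <= n)%nat -> 0 <= hm k m n <= hinf k n.
Proof.
  intros Hn. unfold hm, hinf. split.
  - apply sum_nonneg; intros a Ha. apply Rmult_le_pos. apply nonneg_inv_pow; lia. apply T_nonneg.
  - apply sum_le_loc; intros a Ha. apply Rmult_le_compat_l. apply nonneg_inv_pow; lia.
    apply (core 2 ltac:(lia) a ltac:(lia)).
Qed.

Lemma hm_incr k m n : hm k m n <= hm k m (S n).
Proof.
  unfold hm. rewrite sumS. assert (0 <= inv_pow k (S n) * T 2 m (S n)).
  apply Rmult_le_pos. apply nonneg_inv_pow; lia. apply T_nonneg. lra.
Qed.

Lemma hinf_incr k n : hinf k n <= hinf k (S n).
Proof.
  unfold hinf. rewrite sumS. assert (0 <= inv_pow k (S n) * euler_prod_trunc 2 (S n)).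
  apply Rmult_le_pos. apply nonneg_inv_pow; lia. pose proof (core 2 ltac:(lia) (S n) ltac:(lia)); lra. lra.
Qed.

Lemma hinf_nonneg k n : (1 <= n)%nat -> 0 <= hinf k n.
Proof. intros; pose proof (hm_le k 0 n H); lra. Qed.

Lemma main_i L k : (1 <= k)%nat ->
  (forall m, ex_finite_lim_seq (zeta_star_trunc ((L ++ [k]) ++ repeat 2%nat m))) ->
  (exists M, forall N, zeta_star_trunc (L ++ [k]) N <= M) ->
  ex_finite_lim_seq (rhs_i_trunc (L ++ [k])) /\
  is_lim_seq (fun m => zeta_star ((L ++ [k]) ++ repeat 2%nat m)) (Lim_seq (rhs_i_trunc (L ++ [k]))).
Proof.
  intros Hk Hm [M HM].
  assert (HF := Forall_map_inv_pow L).
  assert (Hex : ex_finite_lim_seq (rhs_i_trunc (L ++ [k]))).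
  { apply ex_shift. apply ex_finite_lim_seq_incr with (2 * M).
    - intros N. rewrite !repB by lia. apply W_incr; auto. apply hinf_nonneg.
      intros; apply hinf_incr. lia.
    - intros N. rewrite repB by lia.
      apply Rle_trans with (W (map inv_pow L) (fun n => 2 * nested_trunc [inv_pow k] n) (S N)).
      + apply W_mono; auto; [|lia]. intros n Hn. split. apply hinf_nonneg; auto.
        simpl. rewrite <- sum_scal. unfold hinf. apply sum_le_loc. intros a Ha.
        rewrite E2_closed by lia. pose proof (INR_ge1 a ltac:(lia)).
        pose proof (nonneg_inv_pow k a ltac:(lia)).
        assert (2 * INR a / (INR a + 1) <= 2).
        { unfold Rdiv. apply Rmult_le_reg_r with (INR a + 1). lra.
          rewrite Rmult_assoc, Rinv_l by (intro; lra). lra. }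
        nra.
      + rewrite W_scal, <- nested_app. specialize (HM (S N)). unfold zeta_star_trunc in HM.
        rewrite map_app in HM. simpl in HM |- *. lra. }
  split; auto.
  destruct Hex as [l Hl].
  rewrite (is_lim_seq_unique _ _ Hl).
  apply is_lim_seq_ext with (fun m => real (Lim_seq (fun N => zeta_star_trunc ((L ++ [k]) ++ repeat 2%nat m) (S N)))).
  { intros m. unfold zeta_star. rewrite Lim_seq_incr_1. auto. }
  apply dbl with (fun N => rhs_i_trunc (L ++ [k]) (S N)).
  - intros m N. rewrite !repA. apply W_incr; auto. intros; apply hm_le; auto.
    intros; apply hm_incr. lia.
  - intros m. apply ex_unshift; auto.
  - intros m N. rewrite repA, repB by lia. apply W_mono; auto; [|lia]. intros; apply hm_le; auto.
  - intros N. rewrite repB by lia.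
    apply is_lim_seq_ext with (fun m => W (map inv_pow L) (hm k m) (S N)).
    intros; rewrite repA; auto.
    apply W_lim; [|lia]. intros n Hn. unfold hm, hinf. apply sum_lim. intros a Ha.
    apply is_lim_seq_mult'. apply is_lim_seq_const. apply (core 2 ltac:(lia) a ltac:(lia)).
  - apply (is_lim_seq_incr_1 (rhs_i_trunc (L ++ [k]))); auto.
Qed.

Lemma Forall_rep2 m : List.Forall (fun k => (1 <= k)%nat) (repeat 2%nat m).
Proof. induction m; simpl; constructor; auto. Qed.

Lemma Forall_repp p m : (1 <= p)%nat -> List.Forall (fun k => (1 <= k)%nat) (repeat p m).
Proof. intros; induction m; simpl; constructor; auto. Qed.

Lemma E_incr p N : (1 <= p)%nat -> euler_prod_trunc p N <= euler_prod_trunc p (S N).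
Proof.
  intros Hp. destruct N. simpl; lra.
  rewrite (E_step p (S N)) by lia. pose proof (core p Hp (S N) ltac:(lia)) as [_ [_ [_ H]]].
  pose proof (x_bnd p (S N) Hp ltac:(lia)).
  assert (1 <= / (1 - inv_pow p (S (S N)))).
  { rewrite <- Rinv_1 at 1. apply Rinv_le_contravar; lra. }
  nra.
Qed.

Lemma E_le_E2 p N : (2 <= p)%nat -> euler_prod_trunc p N <= euler_prod_trunc 2 N.
Proof.
  intros Hp. induction N. right; reflexivity. destruct N. right; reflexivity.
  rewrite (E_step p (S N)), (E_step 2 (S N)) by lia.
  pose proof (core p ltac:(lia) (S N) ltac:(lia)) as [_ [_ [_ H]]].
  pose proof (x_bnd p (S N) ltac:(lia) ltac:(lia)).
  pose proof (x_bnd 2 (S N) ltac:(lia) ltac:(lia)).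
  pose proof (inv_pow_anti p 2 (S (S N)) ltac:(lia) Hp).
  assert (/ (1 - inv_pow p (S (S N))) <= / (1 - inv_pow 2 (S (S N)))).
  { apply Rinv_le_contravar; lra. }
  assert (0 <= / (1 - inv_pow p (S (S N)))).
  { apply Rlt_le, Rinv_0_lt_compat; lra. }
  apply Rmult_le_compat; lra.
Qed.

Lemma E2_le2 N : euler_prod_trunc 2 N <= 2.
Proof.
  destruct N. simpl; lra. rewrite E2_closed by lia.
  pose proof (INR_ge1 (S N) ltac:(lia)).
  unfold Rdiv. apply Rmult_le_reg_r with (INR (S N) + 1). lra.
  rewrite Rmult_assoc, Rinv_l by (intro; lra). lra.
Qed.

Theorem corollary6p2 :
  (* (i) *)
  (forall (k1 : nat) (ks : list nat),
      (2 <= k1)%nat -> List.Forall (fun k => (1 <= k)%nat) ks ->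
      (forall m : nat, ex_finite_lim_seq (zeta_star_trunc ((k1 :: ks) ++ repeat 2%nat m)))
      /\ ex_finite_lim_seq (rhs_i_trunc (k1 :: ks))
      /\ is_lim_seq (fun m : nat => zeta_star ((k1 :: ks) ++ repeat 2%nat m))
                    (Lim_seq (rhs_i_trunc (k1 :: ks))))
  /\
  (* (ii) *)
  (forall p : nat, (2 <= p)%nat ->
      (forall m : nat, ex_finite_lim_seq (zeta_star_trunc (repeat p m)))
      /\ ex_finite_lim_seq (euler_prod_trunc p)
      /\ is_lim_seq (fun m : nat => zeta_star (repeat p m)) (Lim_seq (euler_prod_trunc p))).
Proof.
  split.
  - intros k1 ks Hk1 Hks.
    assert (Hm : forall m, ex_finite_lim_seq (zeta_star_trunc ((k1 :: ks) ++ repeat 2%nat m))).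
    { intros m. simpl. apply zeta_ex; auto. apply Forall_app; split; auto. apply Forall_rep2. }
    assert (HM : exists M, forall N, zeta_star_trunc (k1 :: ks) N <= M).
    { exists (3 * 2 ^ length ks). apply zeta_bnd; auto. }
    assert (HK : List.Forall (fun k => (1 <= k)%nat) (k1 :: ks)) by (constructor; auto; lia).
    split; auto.
    destruct (exists_last (l := k1 :: ks) ltac:(discriminate)) as [L [k e]].
    rewrite e in *.
    apply Forall_app in HK. destruct HK as [_ HK]. inversion HK; subst.
    apply main_i; auto.
  - intros p Hp.
    assert (Hm : forall m, ex_finite_lim_seq (zeta_star_trunc (repeat p m))).
    { intros [|m]. exists 1. apply is_lim_seq_ext with (fun _ => 1). reflexivity. apply is_lim_seq_const.
      simpl. apply zeta_ex; auto. apply Forall_repp; lia. }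
    assert (HE : ex_finite_lim_seq (euler_prod_trunc p)).
    { apply ex_finite_lim_seq_incr with 2. intros; apply E_incr; lia.
      intros N. eapply Rle_trans. apply E_le_E2; auto. apply E2_le2. }
    assert (HT : forall m, zeta_star_trunc (repeat p m) = T p m).
    { intros m. unfold zeta_star_trunc, T. rewrite map_repeat. reflexivity. }
    split; auto. split; auto.
    destruct HE as [l Hl]. rewrite (is_lim_seq_unique _ _ Hl).
    apply is_lim_seq_ext with (fun m => real (Lim_seq (fun N => T p m (S N)))).
    { intros m. unfold zeta_star. rewrite HT, Lim_seq_incr_1. auto. }
    apply dbl with (fun N => euler_prod_trunc p (S N)).
    + intros [|m] N. rewrite !T_0; lra. unfold T. apply nested_incr.
      apply (Forall_repeat_inv_pow p (S m)).
    + intros m. apply ex_unshift. rewrite <- HT. auto.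
    + intros m N. apply (core p ltac:(lia) (S N) ltac:(lia)).
    + intros N. apply (core p ltac:(lia) (S N) ltac:(lia)).
    + apply (is_lim_seq_incr_1 (euler_prod_trunc p)); auto.
Qed.
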